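(* Consider the differential-algebraic system with input $u\in\mathbb R^{n_g+1}$, state $(\varphi,\omega_g)$ (where $\varphi=\varphi_g+\varphi_\ell$) and output $y$: \[ \dot\varphi_g=E_g^{\top}\omega_g,\qquad M\dot\omega_g=-D\omega_g-E_g\nabla U(\varphi)+p_g^*+u,\qquad 0=-E_\ell\nabla U(\varphi)+p_\ell^*,\qquad y=\omega_g . \] Let $(\overline\varphi,\overline\omega_g)$, with $R_\varphi^{\top}\overline\varphi\in(-\tfrac{\pi}{2},\tfrac{\pi}{2})^m$, be an equilibrium of this system for some constant input $u=\overline u$, and let $\overline y=\overline\omega_g$. Then this system is output strictly incrementally passive with respect to $(\overline u,(\overline\varphi,\overline\omega_g),\overline y)$. In particular, the storage function \[ S(\varphi,\omega_g)=\tfrac12(\omega_g-\overline\omega_g)^{\top}M(\omega_g-\overline\omega_g)+U(\varphi)-U(\overline\varphi)-(\varphi-\overline\varphi)^{\top}\nabla U(\overline\varphi) \] satisfies, along solutions, \[ \dot S=-(\omega_g-\overline\omega_g)^{\top}D(\omega_g-\overline\omega_g)+(\omega_g-\overline\omega_g)^{\top}(u-\overline u). \] Moreover, $S$ has a local strict minimum at $(\overline\varphi,\overline\omega_g)$.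
   Context: Power network: $\mathcal G=(\mathcal V,\mathcal E)$ is a connected undirected graph with buses $\mathcal V=\{0,1,\dots,n\}$ and $m$ edges; each edge $\{i,j\}$ has a susceptance $\beta_{ij}<0$, and $V_i>0$ are constant voltage magnitudes. Generator buses are $\mathcal V_g=\{0,1,\dots,n_g\}$ and load buses $\mathcal V_\ell=\mathcal V\setminus\mathcal V_g$. With an arbitrary orientation of edges, $R\in\mathbb R^{(n+1)\times m}$ is the incidence matrix ($R_{ik}=1$ if $i$ is the sink of edge $k$, $-1$ if it is the source, $0$ otherwise); $\Gamma=\mathrm{diag}(\gamma_k)$ with $\gamma_k=|\beta_{ij}|V_iV_j$ for edge $k\sim\{i,j\}$. $R_\varphi\in\mathbb R^{n\times m}$ is $R$ with its first row (bus $0$) removed. $E\in\mathbb R^{(n+1)\times n}$ is defined by $E^{\top}=[-\mathbb 1_n\ \ I_n]$ and partitioned as $E^{\top}=[E_g^{\top}\ E_\ell^{\top}]$, where $E_g$ ($E_\ell$) collects the rows of $E$ indexed by $\mathcal V_g$ ($\mathcal V_\ell$). $U(\varphi)=-\mathbb 1_m^{\top}\Gamma\,\mathbf{cos}(R_\varphi^{\top}\varphi)$ (cosine elementwise), so $\nabla U(\varphi)=R_\varphi\Gamma\,\mathbf{sin}(R_\varphi^{\top}\varphi)$. $M=\mathrm{diag}(M_i)$, $D=\mathrm{diag}(D_i)$ with $M_i,D_i>0$ for $i\in\mathcal V_g$; $p_g^*\in\mathbb R^{n_g+1}$ and $p_\ell^*\in\mathbb R^{n-n_g}$ are constant vectors;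 $\varphi_g,\varphi_\ell\in\mathbb R^n$, $\varphi=\varphi_g+\varphi_\ell$, and $\varphi_\ell$ plays the role of the algebraic variable. An equilibrium for the constant input $\overline u$ is a point $(\overline\varphi,\overline\omega_g)$ with $\overline\varphi\in\mathbb R^n$ and $\overline\omega_g=\mathbb 1\omega^*$ for some $\omega^*\in\mathbb R$, satisfying $0=-D\overline\omega_g-E_g\nabla U(\overline\varphi)+p_g^*+\overline u$ and $0=-E_\ell\nabla U(\overline\varphi)+p_\ell^*$. Incremental passivity: a DAE $\dot x_o=f(x_o,x_a,u)$, $0=g(x_o,x_a)$, $y=h(x_o,u)$ with state $x=(x_o,x_a)$ is incrementally passive with respect to $(\overline u,\overline x,\overline y)$, $\overline y=h(\overline x_o,\overline u)$, if there are a continuously differentiable function $S(x)$, nonnegative on a (possibly small) state set $\mathcal X$, and a positive semidefinite matrix $Q$ such that $\dot S\le-(y-\overline y)^{\top}Q(y-\overline y)+(y-\overline y)^{\top}(u-\overline u)$ for all $x\in\mathcal X$ and all inputs $u$; it is output strictly incrementally passive if moreover $Q$ is positive definite. *)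

(* Defs.v *)
From HB Require Import structures.
From mathcomp Require Import all_boot all_order all_algebra.
From mathcomp Require Import all_classical all_reals all_analysis.
Set Implicit Arguments. Unset Strict Implicit. Unset Printing Implicit Defensive.
Import Order.TTheory GRing.Theory Num.Theory.
Import numFieldNormedType.Exports.
Local Open Scope classical_set_scope.
Local Open Scope ring_scope.

Section Generic.
Variable R : realType.

Definition qform p (Q : 'M[R]_p) (v w : 'cV[R]_p) : R := (v^T *m Q *m w) 0 0.
Definition ip p (v w : 'cV[R]_p) : R := (v^T *m w) 0 0.

Definition pos_semidef p (Q : 'M[R]_p) :=
  Q^T = Q /\ forall v : 'cV[R]_p, 0 <= qform Q v v.
Definition pos_def p (Q : 'M[R]_p) :=
  Q^T = Q /\ forall v : 'cV[R]_p, v != 0 -> 0 < qform Q v v.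

Definition C1 (X : normedModType R) (S : X -> R) :=
  (forall x, differentiable S x) /\ (forall v : X, continuous (fun x => 'D_v S x)).

Definition dae_solution (Xo Xa Z : normedModType R) p
  (f : Xo -> Xa -> 'cV[R]_p -> Xo) (g : Xo -> Xa -> Z)
  (a b : R) (xo : R -> Xo) (xa : R -> Xa) (u : R -> 'cV[R]_p) :=
  forall t, a < t < b ->
    [/\ derivable xo t 1, derivable xa t 1,
        derive1 xo t = f (xo t) (xa t) (u t) & g (xo t) (xa t) = 0].

Definition incr_passive_Q (Xo Xa Z : normedModType R) p
  (f : Xo -> Xa -> 'cV[R]_p -> Xo) (g : Xo -> Xa -> Z) (h : Xo -> 'cV[R]_p -> 'cV[R]_p)
  (ubar : 'cV[R]_p) (xobar : Xo) (xabar : Xa) (Q : 'M[R]_p) :=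
  let ybar := h xobar ubar in
  exists (S : Xo * Xa -> R) (X : set (Xo * Xa)),
    [/\ C1 S, nbhs (xobar, xabar) X, (forall x, X x -> 0 <= S x) &
        forall a b xo xa u, dae_solution f g a b xo xa u ->
        forall t, a < t < b -> X (xo t, xa t) ->
          derivable (fun s => S (xo s, xa s)) t 1 /\
          derive1 (fun s => S (xo s, xa s)) t <=
            - qform Q (h (xo t) (u t) - ybar) (h (xo t) (u t) - ybar)
            + ip (h (xo t) (u t) - ybar) (u t - ubar)].

Definition incr_passive (Xo Xa Z : normedModType R) p
  (f : Xo -> Xa -> 'cV[R]_p -> Xo) (g : Xo -> Xa -> Z) (h : Xo -> 'cV[R]_p -> 'cV[R]_p)
  (ubar : 'cV[R]_p) (xobar : Xo) (xabar : Xa) :=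
  exists Q : 'M[R]_p, pos_semidef Q /\ incr_passive_Q f g h ubar xobar xabar Q.

Definition output_strictly_incr_passive (Xo Xa Z : normedModType R) p
  (f : Xo -> Xa -> 'cV[R]_p -> Xo) (g : Xo -> Xa -> Z) (h : Xo -> 'cV[R]_p -> 'cV[R]_p)
  (ubar : 'cV[R]_p) (xobar : Xo) (xabar : Xa) :=
  exists Q : 'M[R]_p, pos_def Q /\ incr_passive_Q f g h ubar xobar xabar Q.

End Generic.

Section Network.
Variable R : realType.

Definition simple_graph n m (src snk : 'I_m -> 'I_(n.+1)) :=
  (forall k, src k != snk k) /\
  (forall k k', [set src k; snk k] = [set src k'; snk k'] -> k = k').

Definition adj n m (src snk : 'I_m -> 'I_(n.+1)) : rel 'I_(n.+1) :=
  fun i j => [exists k, ((src k == i) && (snk k == j)) || ((src k == j) && (snk k == i))].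

Definition connected_graph n m (src snk : 'I_m -> 'I_(n.+1)) :=
  forall i j, connect (adj src snk) i j.

Definition incidence n m (src snk : 'I_m -> 'I_(n.+1)) : 'M[R]_(n.+1, m) :=
  \matrix_(i, k) (if i == snk k then 1 else if i == src k then -1 else 0).

Definition Rphi n m (src snk : 'I_m -> 'I_(n.+1)) : 'M[R]_(n, m) :=
  \matrix_(i, k) incidence src snk (lift ord0 i) k.

Definition gam n m (src snk : 'I_m -> 'I_(n.+1)) (beta : 'I_m -> R) (V : 'I_(n.+1) -> R)
  (k : 'I_m) : R := `|beta k| * V (src k) * V (snk k).

Definition Gam n m (src snk : 'I_m -> 'I_(n.+1)) beta V : 'M[R]_m :=
  diag_mx (\row_k gam src snk beta V k).

(* E^T = [ -1_n  I_n ] *)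
Definition Emx n : 'M[R]_(n.+1, n) :=
  \matrix_(i, j) (if i == ord0 then -1 else if (i : nat) == j.+1 then 1 else 0).
(* rows of E indexed by generator buses 0..ng *)
Definition Eg n ng : 'M[R]_(ng.+1, n) := \matrix_(i, j) Emx n (inord i) j.
(* rows of E indexed by load buses ng+1..n *)
Definition El n ng : 'M[R]_(n - ng, n) := \matrix_(i, j) Emx n (inord (ng.+1 + i)) j.

Definition Upot n m (src snk : 'I_m -> 'I_(n.+1)) beta V (phi : 'cV[R]_n) : R :=
  - \sum_k gam src snk beta V k * cos (((Rphi src snk)^T *m phi) k 0).

Definition gradU n m (src snk : 'I_m -> 'I_(n.+1)) beta V (phi : 'cV[R]_n) : 'cV[R]_n :=
  Rphi src snk *m Gam src snk beta V *m \col_k sin (((Rphi src snk)^T *m phi) k 0).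

(* The power-network DAE.  Differential state xo = (phi_g, omega_g);
   algebraic state xa = theta_l with phi_l = E_l^T theta_l; phi = phi_g + phi_l. *)
Definition pn_f n m ng (src snk : 'I_m -> 'I_(n.+1)) beta V
  (Mv Dv : 'I_(ng.+1) -> R) (pg : 'cV[R]_(ng.+1))
  (xo : 'cV[R]_n * 'cV[R]_(ng.+1)) (xa : 'cV[R]_(n - ng)) (u : 'cV[R]_(ng.+1))
  : 'cV[R]_n * 'cV[R]_(ng.+1) :=
  let phi := xo.1 + (El n ng)^T *m xa in
  let w := xo.2 in
  ((Eg n ng)^T *m w,
   invmx (diag_mx (\row_i Mv i)) *m
     (- (diag_mx (\row_i Dv i) *m w) - Eg n ng *m gradU src snk beta V phi + pg + u)).

Definition pn_g n m ng (src snk : 'I_m -> 'I_(n.+1)) beta V (pl : 'cV[R]_(n - ng))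
  (xo : 'cV[R]_n * 'cV[R]_(ng.+1)) (xa : 'cV[R]_(n - ng)) : 'cV[R]_(n - ng) :=
  - (El n ng *m gradU src snk beta V (xo.1 + (El n ng)^T *m xa)) + pl.

Definition pn_h n ng (xo : 'cV[R]_n * 'cV[R]_(ng.+1)) (u : 'cV[R]_(ng.+1)) : 'cV[R]_(ng.+1) :=
  xo.2.

Definition storage n m ng (src snk : 'I_m -> 'I_(n.+1)) beta V (Mv : 'I_(ng.+1) -> R)
  (phibar : 'cV[R]_n) (wbar : 'cV[R]_(ng.+1)) (phi : 'cV[R]_n) (w : 'cV[R]_(ng.+1)) : R :=
  2^-1 * qform (diag_mx (\row_i Mv i)) (w - wbar) (w - wbar)
  + Upot src snk beta V phi - Upot src snk beta V phibar
  - ip (phi - phibar) (gradU src snk beta V phibar).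

End Network.

(* Main.v *)
Require Import Defs.
From HB Require Import structures.
From mathcomp Require Import all_boot all_order all_algebra.
From mathcomp Require Import all_classical all_reals all_analysis.
From mathcomp Require Import ring lra.
Import Order.TTheory GRing.Theory Num.Theory.
Import numFieldNormedType.Exports.
Local Open Scope classical_set_scope.
Local Open Scope ring_scope.
Set Implicit Arguments.
Unset Strict Implicit.
Section Good.
Variables (R : realType) (X : normedModType R).

Definition good (F : X -> R) (dF : X -> X -> R) :=
  [/\ (forall x, differentiable F x), (forall x, 'd F x = dF x :> (X -> R))
    & (forall v, continuous (fun x => dF x v))].

Lemma good_ext F dF G dG : good F dF -> (forall x, F x = G x) ->
  (forall x v, dF x v = dG x v) -> good G dG.
Proof.
move=> [h1 h2 h3] eF edF.
have -> : G = F by apply/funext => x; rewrite eF.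
have -> : dG = dF by apply/funext => x; apply/funext => v; rewrite edF.
by split.
Qed.

Lemma good_cst c : good (fun _ => c) (fun _ _ => 0).
Proof.
split => [x|x|v]; first exact: differentiable_cst.
  by rewrite (diff_cst c x).
exact: cst_continuous.
Qed.

Lemma good_add F dF G dG : good F dF -> good G dG ->
  good (fun x => F x + G x) (fun x v => dF x v + dG x v).
Proof.
move=> [f1 f2 f3] [g1 g2 g3]; split => [x|x|v].
- exact: (differentiableD (f1 x) (g1 x)).
- by rewrite (diffD (f1 x) (g1 x)) f2 g2.
- by move=> x; apply: (@continuousD _ R^o); [apply: f3|apply: g3].
Qed.

Lemma good_scale c F dF : good F dF ->
  good (fun x => c * F x) (fun x v => c * dF x v).
Proof.
move=> [f1 f2 f3]; split => [x|x|v].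
- exact: (differentiableZ c (f1 x)).
- by rewrite (diffZ c (f1 x)) f2.
- move=> x; apply: (@continuousZ _ R^o _ (fun=> c) (fun x => dF x v)).
    exact: cst_continuous.
  exact: f3.
Qed.

Lemma good_mul F dF G dG : good F dF -> good G dG ->
  good (fun x => F x * G x) (fun x v => F x * dG x v + G x * dF x v).
Proof.
move=> [f1 f2 f3] [g1 g2 g3]; split => [x|x|v].
- exact: (differentiableM (f1 x) (g1 x)).
- by rewrite (diffM (f1 x) (g1 x)) f2 g2.
- move=> x; apply: (@continuousD _ _ _ (fun x => F x * dG x v) (fun x => G x * dF x v)); apply: continuousM.
  + exact: differentiable_continuous.
  + exact: g3.
  + exact: differentiable_continuous.
  + exact: f3.
Qed.

Lemma good_sum (I : Type) (r : seq I) (F : I -> X -> R) dF :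
  (forall i, good (F i) (dF i)) ->
  good (fun x => \sum_(i <- r) F i x) (fun x v => \sum_(i <- r) dF i x v).
Proof.
move=> H; elim: r => [|a r IH].
  apply: good_ext (good_cst 0) _ _ => [x|x v]; by rewrite big_nil.
apply: good_ext (good_add (H a) IH) _ _ => [x|x v]; by rewrite big_cons.
Qed.

Lemma good_comp (phi dphi : R -> R) F dF :
  (forall s : R, is_derive s (1:R) phi (dphi s)) -> continuous dphi -> good F dF ->
  good (fun x => phi (F x)) (fun x v => dphi (F x) * dF x v).
Proof.
move=> hp cp [f1 f2 f3].
have dphi_d s : differentiable phi s.
  by apply/derivable1_diffP; exact: (ex_derive (is_derive := hp s)).
split => [x|x|v].
- exact: (@differentiable_comp _ _ _ _ F phi x (f1 x) (dphi_d (F x))).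
- rewrite (@diff_comp _ _ _ _ F phi x (f1 x) (dphi_d (F x))).
  apply/funext => v /=.
  rewrite deriv1E; last by apply/derivable1_diffP.
  rewrite f2 /= derive1E (derive_val (is_derive := hp (F x))).
  by rewrite mulrC.
- move=> x; apply: continuousM.
  + apply: continuous_comp; last exact: cp.
    exact: differentiable_continuous.
  + exact: f3.
Qed.

Lemma good_cos F dF : good F dF ->
  good (fun x => cos (F x)) (fun x v => - sin (F x) * dF x v).
Proof.
move=> h.
have cc : continuous (fun s : R => - sin s).
  move=> s; apply: continuousN; exact: continuous_sin.
have dd : forall s : R, is_derive s (1:R) cos (- sin s).
  move=> s; exact: is_derive_cos.
exact: (good_comp dd cc h).
Qed.

Lemma good_lin (l : X -> R) : linear l -> continuous l ->
  good l (fun _ v => l v).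
Proof.
move=> ll cl.
pose lM := GRing.isLinear.Build _ _ _ _ _ ll.
pose L : {linear X -> R} := HB.pack l lM.
have -> : l = L by [].
split => [x|x|v].
- exact: linear_differentiable.
- by rewrite diff_lin.
- exact: cst_continuous.
Qed.

End Good.

Section Coords.
Variables (R : realType) (a b c : nat).
Local Notation X := (('cV[R]_a * 'cV[R]_b) * 'cV[R]_c)%type.

Lemma cont_c11 (j : 'I_a) : continuous (fun x : X => x.1.1 j 0).
Proof.
move=> x; apply: (@continuous_comp _ _ _ (fun x : X => x.1.1) (fun M : 'cV[R]_a => M j 0)); last exact: coord_continuous.
apply: (@continuous_comp _ _ _ (fun x : X => x.1) (fun y : 'cV[R]_a * 'cV[R]_b => y.1)); exact: cvg_fst.
Qed.
Lemma cont_c12 (j : 'I_b) : continuous (fun x : X => x.1.2 j 0).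
Proof.
move=> x; apply: (@continuous_comp _ _ _ (fun x : X => x.1.2) (fun M : 'cV[R]_b => M j 0)); last exact: coord_continuous.
apply: (@continuous_comp _ _ _ (fun x : X => x.1) (fun y : 'cV[R]_a * 'cV[R]_b => y.2)); [exact: cvg_fst|exact: cvg_snd].
Qed.
Lemma cont_c2 (j : 'I_c) : continuous (fun x : X => x.2 j 0).
Proof.
move=> x; apply: (@continuous_comp _ _ _ (fun x : X => x.2) (fun M : 'cV[R]_c => M j 0)); last exact: coord_continuous.
exact: cvg_snd.
Qed.

Lemma good_c11 (j : 'I_a) : good (fun x : X => x.1.1 j 0) (fun _ v => v.1.1 j 0).
Proof. apply: good_lin; last exact: cont_c11. by move=> k x y; rewrite /= !mxE. Qed.
Lemma good_c12 (j : 'I_b) : good (fun x : X => x.1.2 j 0) (fun _ v => v.1.2 j 0).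
Proof. apply: good_lin; last exact: cont_c12. by move=> k x y; rewrite /= !mxE. Qed.
Lemma good_c2 (j : 'I_c) : good (fun x : X => x.2 j 0) (fun _ v => v.2 j 0).
Proof. apply: good_lin; last exact: cont_c2. by move=> k x y; rewrite /= !mxE. Qed.

End Coords.

Lemma qform_diag (R : realType) p (d : 'I_p -> R) (v w : 'cV[R]_p) :
  qform (diag_mx (\row_i d i)) v w = \sum_i v i 0 * d i * w i 0.
Proof.
rewrite /qform mul_mx_diag !mxE; apply: eq_bigr => i _; by rewrite !mxE.
Qed.

Lemma ip_sum (R : realType) p (v w : 'cV[R]_p) : ip v w = \sum_i v i 0 * w i 0.
Proof. rewrite /ip !mxE; apply: eq_bigr => i _; by rewrite !mxE. Qed.

Lemma trmul_coord (R : realType) p q (A : 'M[R]_(p, q)) (v : 'cV[R]_p) k :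
  (A^T *m v) k 0 = \sum_j A j k * v j 0.
Proof. rewrite !mxE; apply: eq_bigr => j _; by rewrite !mxE. Qed.


Section IP.
Variable R : realType.

Lemma ipDl p (a b c : 'cV[R]_p) : ip (a + b) c = ip a c + ip b c.
Proof. by rewrite /ip linearD /= mulmxDl mxE. Qed.
Lemma ipDr p (a b c : 'cV[R]_p) : ip a (b + c) = ip a b + ip a c.
Proof. by rewrite /ip mulmxDr mxE. Qed.
Lemma ipNl p (a c : 'cV[R]_p) : ip (- a) c = - ip a c.
Proof. by rewrite /ip linearN /= mulNmx mxE. Qed.
Lemma ipNr p (a c : 'cV[R]_p) : ip a (- c) = - ip a c.
Proof. by rewrite /ip mulmxN mxE. Qed.
Lemma ipBl p (a b c : 'cV[R]_p) : ip (a - b) c = ip a c - ip b c.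
Proof. by rewrite ipDl ipNl. Qed.
Lemma ipBr p (a b c : 'cV[R]_p) : ip a (b - c) = ip a b - ip a c.
Proof. by rewrite ipDr ipNr. Qed.
Lemma ipC p (a b : 'cV[R]_p) : ip a b = ip b a.
Proof. rewrite !ip_sum; apply: eq_bigr => i _; exact: mulrC. Qed.
Lemma ip0r p (a : 'cV[R]_p) : ip a 0 = 0.
Proof. by rewrite /ip mulmx0 mxE. Qed.
Lemma ip0l p (a : 'cV[R]_p) : ip 0 a = 0.
Proof. by rewrite ipC ip0r. Qed.
Lemma ip_trmx p q (a : 'cV[R]_p) (B : 'M[R]_(q, p)) (c : 'cV[R]_q) :
  ip a (B^T *m c) = ip (B *m a) c.
Proof. by rewrite /ip trmx_mul mulmxA. Qed.
Lemma ip_mulmx p q (a : 'cV[R]_p) (B : 'M[R]_(p, q)) (c : 'cV[R]_q) :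
  ip a (B *m c) = ip (B^T *m a) c.
Proof. by rewrite -ip_trmx trmxK. Qed.
Lemma qform_ip p (Q : 'M[R]_p) (a b : 'cV[R]_p) : qform Q a b = ip a (Q *m b).
Proof. by rewrite /qform /ip mulmxA. Qed.

Lemma diag_unit p (d : 'I_p -> R) : (forall i, 0 < d i) ->
  diag_mx (\row_i d i) \in unitmx.
Proof.
move=> hd; rewrite unitmxE det_diag unitfE; apply/prodf_neq0 => i _.
by rewrite mxE gt_eqF.
Qed.

Lemma qform_inv p (d : 'I_p -> R) (a b : 'cV[R]_p) : (forall i, 0 < d i) ->
  qform (diag_mx (\row_i d i)) a (invmx (diag_mx (\row_i d i)) *m b) = ip a b.
Proof.
by move=> hd; rewrite qform_ip mulmxA mulmxV ?mul1mx // diag_unit.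
Qed.

Lemma Emx_colsum n (j : 'I_n) : \sum_(i < n.+1) Emx R n i j = 0.
Proof.
rewrite big_ord_recl !mxE eqxx.
rewrite (eq_bigr (fun i : 'I_n => if i == j then 1 else 0)); last first.
  by move=> i _; rewrite mxE /= /bump leq0n add1n eqSS.
rewrite (bigD1 j) //= eqxx big1 ?addr0 ?addNr // => i /negbTE -> //.
Qed.

Lemma Emx_sum n (z : 'cV[R]_n) : \sum_(i < n.+1) (Emx R n *m z) i 0 = 0.
Proof.
under eq_bigr do rewrite mxE.
rewrite exchange_big /= big1 // => j _.
by rewrite -mulr_suml Emx_colsum mul0r.
Qed.

Lemma split_sum n ng (G : 'I_(n.+1) -> R) : (ng <= n)%N ->
  \sum_(i < ng.+1) G (inord i) + \sum_(i < n - ng) G (inord (ng.+1 + i))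
  = \sum_(i < n.+1) G i.
Proof.
move=> hng.
rewrite [RHS](eq_bigr (fun i : 'I_(n.+1) => G (inord i))); last by move=> i _; rewrite inord_val.
rewrite -[X in _ = X](big_mkord xpredT (fun i => G (inord i))).
rewrite [RHS](big_cat_nat _ (n := ng.+1)) //=.
rewrite big_mkord; congr (_ + _).
have := big_addn 0 n.+1 ng.+1 xpredT (fun i => G (inord i)); rewrite add0n => ->.
rewrite subSS big_mkord.
by apply: eq_bigr => i _; rewrite addnC.
Qed.

Lemma ip_const_Eg n ng (c : R) (z : 'cV[R]_n) : (ng <= n)%N ->
  El R n ng *m z = 0 -> ip (const_mx c) (Eg R n ng *m z) = 0.
Proof.
move=> hng hz.
have hEg : forall i : 'I_(ng.+1), (Eg R n ng *m z) i 0 = (Emx R n *m z) (inord i) 0.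
  by move=> i; rewrite !mxE; apply: eq_bigr => j _; rewrite !mxE.
have hEl : forall i : 'I_(n - ng), (El R n ng *m z) i 0 = (Emx R n *m z) (inord (ng.+1 + i)) 0.
  by move=> i; rewrite !mxE; apply: eq_bigr => j _; rewrite !mxE.
have := split_sum (fun i => (Emx R n *m z) i 0) hng.
rewrite Emx_sum -(eq_bigr _ (fun i _ => hEg i)) -(eq_bigr _ (fun i _ => hEl i)) hz.
under [X in _ + X]eq_bigr do rewrite mxE.
rewrite [X in _ + X]big1 // addr0 => hs.
by rewrite ip_sum (eq_bigr (fun i => c * (Eg R n ng *m z) i 0)) ?hs -?mulr_sumr ?hs ?mulr0 // => i _; rewrite mxE.
Qed.

End IP.
Section Net.
Variables (R : realType) (n m ng : nat)
  (src snk : 'I_m -> 'I_(n.+1)) (beta : 'I_m -> R) (V : 'I_(n.+1) -> R)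
  (Mv : 'I_(ng.+1) -> R) (phibar : 'cV[R]_n) (wbar : 'cV[R]_(ng.+1)).

Local Notation X := (('cV[R]_n * 'cV[R]_(ng.+1)) * 'cV[R]_(n - ng))%type.
Local Notation El := (El R n ng).
Local Notation Rp := (Rphi R src snk).
Local Notation gm := (gam src snk beta V).

Definition phiL (x : X) : 'cV[R]_n := x.1.1 + El^T *m x.2.
Definition SS (x : X) : R := storage src snk beta V Mv phibar wbar (phiL x) x.1.2.

Definition phiLc (x : X) j := x.1.1 j 0 + \sum_i El i j * x.2 i 0.
Definition xk (x : X) k := \sum_j Rp j k * phiLc x j.
Local Notation gb := (gradU src snk beta V phibar).

Definition SSe (x : X) : R :=
  \sum_i (2^-1 * Mv i) * ((x.1.2 i 0 - wbar i 0) * (x.1.2 i 0 - wbar i 0))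
  + \sum_k (- gm k) * cos (xk x k)
  + (- Upot src snk beta V phibar + \sum_j gb j 0 * phibar j 0)
  + \sum_j (- gb j 0) * phiLc x j.

Definition dS (x v : X) : R :=
  \sum_i Mv i * (x.1.2 i 0 - wbar i 0) * v.1.2 i 0
  + \sum_k gm k * sin (xk x k) * xk v k
  - \sum_j gb j 0 * phiLc v j.

Lemma phiLcE x j : phiLc x j = phiL x j 0.
Proof. by rewrite /phiLc /phiL mxE trmul_coord. Qed.

Lemma xkE x k : xk x k = (Rp^T *m phiL x) k 0.
Proof. rewrite /xk trmul_coord; apply: eq_bigr => j _; by rewrite phiLcE. Qed.

Lemma SSE x : SS x = SSe x.
Proof.
rewrite /SS /SSe /storage qform_diag ip_sum /Upot.
have -> : \sum_i (x.1.2 - wbar) i 0 * Mv i * (x.1.2 - wbar) i 0 =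
  2 * \sum_i 2^-1 * Mv i * ((x.1.2 i 0 - wbar i 0) * (x.1.2 i 0 - wbar i 0)).
  by rewrite mulr_sumr; apply: eq_bigr => i _; rewrite !mxE; field.
set T2 := (X in _ = _ + X + _ + _).
set T4 := (X in _ = _ + X).
have -> : T2 = - \sum_k gm k * cos ((Rp^T *m phiL x) k 0).
  rewrite /T2 -sumrN; apply: eq_bigr => k _; rewrite xkE; ring.
have -> : T4 = - \sum_j gb j 0 * phiL x j 0.
  rewrite /T4 -sumrN; apply: eq_bigr => j _; rewrite phiLcE; ring.
have -> : \sum_i (phiL x - phibar) i 0 * gb i 0 =
   \sum_j gb j 0 * phiL x j 0 - \sum_j gb j 0 * phibar j 0.
  rewrite -sumrB; apply: eq_bigr => j _; rewrite !mxE; ring.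
rewrite mulrA mulVf ?mul1r //. lra.
Qed.

Lemma good_phiLc j : good (fun x : X => phiLc x j) (fun _ v => phiLc v j).
Proof.
apply: good_add; first exact: good_c11.
by apply: good_sum => i; apply: good_scale; apply: good_c2.
Qed.

Lemma good_xk k : good (fun x : X => xk x k) (fun _ v => xk v k).
Proof. by apply: good_sum => j; apply: good_scale; apply: good_phiLc. Qed.

Lemma good_SS : good SS dS.
Proof.
have gw i : good (fun x : X => x.1.2 i 0 - wbar i 0) (fun _ v => v.1.2 i 0 + 0).
  exact: good_add (good_c12 _ _ _ _) (good_cst _ _).
have h1 := good_sum (index_enum 'I_(ng.+1)) (fun i => good_scale (2^-1 * Mv i) (good_mul (gw i) (gw i))).
have h2 := good_sum (index_enum 'I_m) (fun k => good_scale (- gm k) (good_cos (good_xk k))).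
have h3 := good_cst X (- Upot src snk beta V phibar + \sum_j gb j 0 * phibar j 0).
have h4 := good_sum (index_enum 'I_n) (fun j => good_scale (- gb j 0) (good_phiLc j)).
apply: good_ext (good_add (good_add (good_add h1 h2) h3) h4) _ _ => [x|x v].
  by rewrite SSE.
rewrite /dS addr0 -sumrN /=.
set A := (X in X + _ + _ = _); set B := (X in _ + X + _ = _); set C := (X in _ + _ + X = _).
set A' := (X in _ = X + _ + _); set B' := (X in _ = _ + X + _); set C' := (X in _ = _ + _ + X).
have -> : A = A' by rewrite /A /A'; apply: eq_bigr => i _; rewrite !addr0; field.
have -> : B = B' by rewrite /B /B'; apply: eq_bigr => i _; ring.
have -> : C = C' by rewrite /C /C'; apply: eq_bigr => i _; ring.
by [].
Qed.



Lemma gradU_ip (phi psi : 'cV[R]_n) :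
  ip (gradU src snk beta V phi) psi =
  \sum_k gm k * sin ((Rp^T *m phi) k 0) * (Rp^T *m psi) k 0.
Proof.
rewrite ip_sum.
under eq_bigr => j _ do rewrite /gradU /Gam mul_mx_diag mxE big_distrl /=.
rewrite exchange_big /=; apply: eq_bigr => k _.
rewrite [X in _ = _ * X]trmul_coord mulr_sumr; apply: eq_bigr => j _.
rewrite !mxE; ring.
Qed.

Lemma dSE (x v : X) : dS x v =
  qform (diag_mx (\row_i Mv i)) (x.1.2 - wbar) v.1.2
  + ip (gradU src snk beta V (phiL x) - gb) (phiL v).
Proof.
rewrite /dS qform_diag ipBl gradU_ip ip_sum.
have eA : \sum_i Mv i * (x.1.2 i 0 - wbar i 0) * v.1.2 i 0 = \sum_i (x.1.2 - wbar) i 0 * Mv i * v.1.2 i 0.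
  by apply: eq_bigr => i _; rewrite !mxE; ring.
have eB : \sum_k gm k * sin (xk x k) * xk v k = \sum_k gm k * sin ((Rp^T *m phiL x) k 0) * (Rp^T *m phiL v) k 0.
  by apply: eq_bigr => k _; rewrite !xkE.
have eC : \sum_j gb j 0 * phiLc v j = \sum_i gb i 0 * phiL v i 0.
  by apply: eq_bigr => j _; rewrite phiLcE.
lra.
Qed.

Lemma SS_path (xo : R -> 'cV[R]_n * 'cV[R]_(ng.+1)) (xa : R -> 'cV[R]_(n - ng)) t :
  derivable xo t 1 -> derivable xa t 1 ->
  derivable (fun s => SS (xo s, xa s)) t 1 /\
  derive1 (fun s => SS (xo s, xa s)) t = dS (xo t, xa t) (derive1 xo t, derive1 xa t).
Proof.
move=> /derivable1_diffP dxo /derivable1_diffP dxa.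
have [g1 g2 _] := good_SS.
have dp := differentiable_pair dxo dxa.
have dc := differentiable_comp dp (g1 (xo t, xa t)).
split; first exact/derivable1_diffP.
rewrite derive1E' // diff_comp // g2 diff_pair //.
by rewrite /= -!derive1E'.
Qed.

End Net.

Section Trig.
Variable R : realType.

Lemma mvt_cos (a b : R) : a < b ->
  exists2 c, a < c < b & cos b - cos a = - sin c * (b - a).
Proof.
move=> ab.
have [c cin h] := @MVT R cos (fun x => - sin x) a b ab
  (fun x _ => is_derive_cos x) (continuous_subspaceT (@continuous_cos R)).
by exists c => //; move: cin; rewrite in_itv.
Qed.

Lemma mvt_sin (a b : R) : a < b ->
  exists2 c, a < c < b & sin b - sin a = cos c * (b - a).
Proof.
move=> ab.
have [c cin h] := @MVT R sin cos a b ab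
  (fun x _ => is_derive_sin x) (continuous_subspaceT (@continuous_sin R)).
by exists c => //; move: cin; rewrite in_itv.
Qed.

Lemma Fpos (a s : R) : - (pi / 2) < a < pi / 2 -> - (pi / 2) < s < pi / 2 ->
  s != a -> 0 < cos a - cos s - (s - a) * sin a.
Proof.
move=> /andP[a1 a2] /andP[s1 s2]; rewrite neq_lt => /orP[sa|hlt].
- have [c /andP[c1 c2] hc] := mvt_cos sa.
  have [d /andP[d1 d2] hd] := mvt_sin c2.
  have cd : 0 < cos d by apply: cos_gt0_pihalf; apply/andP; split; lra.
  have -> : cos a - cos s - (s - a) * sin a = (a - s) * (sin a - sin c).
    rewrite hc; ring.
  rewrite hd; apply: mulr_gt0; first lra.
  apply: mulr_gt0 => //; lra.
- have [c /andP[c1 c2] hc] := mvt_cos hlt.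
  have [d /andP[d1 d2] hd] := mvt_sin c1.
  have cd : 0 < cos d by apply: cos_gt0_pihalf; apply/andP; split; lra.
  have -> : cos a - cos s - (s - a) * sin a = (s - a) * (sin c - sin a).
    have -> : cos a - cos s = - (cos s - cos a) by ring.
    rewrite hc; ring.
  rewrite hd; apply: mulr_gt0; first lra.
  apply: mulr_gt0 => //; lra.
Qed.

Lemma qdiag_ge0 p (d : 'I_p -> R) (a : 'cV[R]_p) : (forall i, 0 < d i) ->
  0 <= qform (diag_mx (\row_i d i)) a a.
Proof.
move=> hd; rewrite qform_diag; apply: sumr_ge0 => i _.
have := hd i; nra.
Qed.

Lemma qdiag_gt0 p (d : 'I_p -> R) (a : 'cV[R]_p) : (forall i, 0 < d i) ->
  a != 0 -> 0 < qform (diag_mx (\row_i d i)) a a.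
Proof.
move=> hd anz.
have [i hi] : exists i, a i 0 != 0.
  apply/existsP; move: anz; apply: contraR; rewrite negb_exists => /forallP h.
  apply/eqP/matrixP => i j; rewrite (ord1 j) mxE; exact/eqP/negPn/h.
rewrite qform_diag (bigD1 i) //=.
have t0 : forall j, 0 <= a j 0 * d j * a j 0.
  move=> j; have := hd j; nra.
have := hd i; have : 0 < a i 0 ^+ 2 by rewrite exprn_even_gt0.
have : 0 <= \sum_(j | j != i) a j 0 * d j * a j 0 by apply: sumr_ge0 => j _.
move=> h1 h2 h3; nra.
Qed.

End Trig.

Lemma Rphi_inj (R : realType) n m (src snk : 'I_m -> 'I_(n.+1)) :
  (forall k, src k != snk k) -> connected_graph src snk ->
  forall d : 'cV[R]_n, (Rphi R src snk)^T *m d = 0 -> d = 0.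
Proof.
move=> hne hc d hd.
pose ext (i : 'I_(n.+1)) : R := if unlift ord0 i is Some j then d j 0 else 0.
have ext0 : ext ord0 = 0 by rewrite /ext unlift_none.
have extl j : ext (lift ord0 j) = d j 0 by rewrite /ext liftK.
have key k : ((Rphi R src snk)^T *m d) k 0 = ext (snk k) - ext (src k).
  rewrite trmul_coord.
  have -> : \sum_j Rphi R src snk j k * d j 0 =
      \sum_(i < n.+1) ((i == snk k)%:R - (i == src k)%:R) * ext i.
    rewrite big_ord_recl ext0 mulr0 add0r; apply: eq_bigr => j _.
    rewrite extl !mxE; case: eqP => [e1|]; case: eqP => [e2|] //=.
    + by move: (hne k); rewrite -e1 -e2 eqxx.
    + by rewrite subr0.
    + by rewrite sub0r.
    + by rewrite subrr.
  rewrite (eq_bigr (fun i => (i == snk k)%:R * ext i - (i == src k)%:R * ext i)); last first.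
    by move=> i _; rewrite mulrBl.
  have s1 a : \sum_(i < n.+1) (i == a)%:R * ext i = ext a.
    rewrite (bigD1 a) //= eqxx mul1r big1 ?addr0 // => i /negbTE ->; by rewrite mul0r.
  by rewrite sumrB !s1.
have hadj i j : adj src snk i j -> ext i = ext j.
  move=> /existsP[k /orP[/andP[/eqP e1 /eqP e2]|/andP[/eqP e1 /eqP e2]]].
  - have := key k; rewrite hd mxE -e1 -e2 => /eqP; rewrite eq_sym subr_eq0 => /eqP ->.
    by [].
  - have := key k; rewrite hd mxE -e1 -e2 => /eqP; rewrite eq_sym subr_eq0 => /eqP ->.
    by [].
have hpath : forall p x, path (adj src snk) x p -> ext (last x p) = ext x.
  elim => [//|y p IH] x /= /andP[hxy hp].
  by rewrite IH // (hadj _ _ hxy).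
apply/matrixP => j c; rewrite (ord1 c) mxE -extl -ext0.
have /connectP[p hp ->] := hc ord0 (lift ord0 j).
exact: hpath.
Qed.

Lemma good_coordv (R : realType) n (j : 'I_n) :
  good (fun M : 'cV[R]_n => M j 0) (fun _ v => v j 0).
Proof.
apply: good_lin; last exact: coord_continuous.
by move=> k x y; rewrite !mxE.
Qed.

Lemma cont_lin_coord (R : realType) n p (A : 'M[R]_(n, p)) k :
  continuous (fun phi : 'cV[R]_n => (A^T *m phi) k 0).
Proof.
have := good_sum (index_enum 'I_n) (fun j => good_scale (A j k) (good_coordv R j)).
move=> [g1 _ _] x.
have -> : (fun phi : 'cV[R]_n => (A^T *m phi) k 0) =
          (fun phi => \sum_(j <- index_enum 'I_n) A j k * phi j 0).
  by apply/funext => phi; rewrite trmul_coord.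
exact: differentiable_continuous.
Qed.

Lemma mxnorm_lt (R : realType) p q (M : 'M[R]_(p, q)) e : 0 < e ->
  (forall i j, `|M i j| < e) -> `|M| < e.
Proof.
move=> e0 h; rewrite /Num.Def.normr /= mx_normrE.
by apply: bigmax_lt => // -[i j] _; exact: h.
Qed.

Section Net3.
Variables (R : realType) (n m ng : nat)
  (src snk : 'I_m -> 'I_(n.+1)) (beta : 'I_m -> R) (V : 'I_(n.+1) -> R)
  (Mv : 'I_(ng.+1) -> R) (phibar : 'cV[R]_n) (wbar : 'cV[R]_(ng.+1)).

Local Notation Rp := (Rphi R src snk).
Local Notation gm := (gam src snk beta V).
Local Notation xb k := ((Rp^T *m phibar) k 0).
Local Notation Md := (diag_mx (\row_i Mv i)).

Definition Fterm (phi : 'cV[R]_n) k :=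
  gm k * (cos (xb k) - cos ((Rp^T *m phi) k 0) - ((Rp^T *m phi) k 0 - xb k) * sin (xb k)).

Lemma storage_eq phi w : storage src snk beta V Mv phibar wbar phi w =
  2^-1 * qform Md (w - wbar) (w - wbar) + \sum_k Fterm phi k.
Proof.
rewrite /storage /Upot ipC gradU_ip.
have E : \sum_k Fterm phi k = \sum_k gm k * cos (xb k) - \sum_k gm k * cos ((Rp^T *m phi) k 0)
   - \sum_k gm k * sin (xb k) * (Rp^T *m (phi - phibar)) k 0.
  rewrite -!sumrB; apply: eq_bigr => k _; rewrite /Fterm mulmxBr !mxE; ring.
rewrite E; lra.
Qed.

Lemma storage_bar : storage src snk beta V Mv phibar wbar phibar wbar = 0.
Proof.
rewrite storage_eq subrr /qform mulmx0 mxE mulr0 add0r big1 // => k _.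
by rewrite /Fterm !subrr mul0r subrr mulr0.
Qed.

Hypotheses (hne : forall k, src k != snk k) (hc : connected_graph src snk)
  (hg : forall k, 0 < gm k) (hM : forall i, 0 < Mv i)
  (hbar : forall k, - (pi / 2) < xb k < pi / 2).

Lemma Fterm_ge0 phi k : - (pi / 2) < (Rp^T *m phi) k 0 < pi / 2 -> 0 <= Fterm phi k.
Proof.
move=> hk; rewrite /Fterm; have [e|ne] := eqVneq ((Rp^T *m phi) k 0) (xb k).
  by rewrite e !subrr mul0r subrr mulr0.
by apply/ltW/mulr_gt0; [exact: hg | exact: Fpos].
Qed.

Lemma Fterm_gt0 phi k : - (pi / 2) < (Rp^T *m phi) k 0 < pi / 2 ->
  (Rp^T *m phi) k 0 != xb k -> 0 < Fterm phi k.
Proof. by move=> hk ne; apply/mulr_gt0; [exact: hg | exact: Fpos]. Qed.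

Lemma strict_min : exists2 e : R, 0 < e & forall phi w,
  `|phi - phibar| < e ->
  [/\ 0 <= storage src snk beta V Mv phibar wbar phi w &
    ((phi, w) != (phibar, wbar) ->
      storage src snk beta V Mv phibar wbar phibar wbar
      < storage src snk beta V Mv phibar wbar phi w)].
Proof.
have hnb : nbhs phibar [set phi : 'cV[R]_n | forall k, - (pi / 2) < (Rp^T *m phi) k 0 < pi / 2].
  apply: (@filter_forall _ _ (fun k (phi : 'cV[R]_n) => - (pi / 2) < (Rp^T *m phi) k 0 < pi / 2) (nbhs phibar) (nbhs_filter phibar)) => k.
  have hk := hbar k.
  pose mg := Num.min (xb k + pi / 2) (pi / 2 - xb k).
  have mg0 : 0 < mg by rewrite lt_min; apply/andP; split; case/andP: hk => h1 h2; lra.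
  have := (@cont_lin_coord _ _ _ Rp k phibar).
  move/cvgrPdist_lt => /(_ mg mg0); apply: filterS => phi.
  rewrite lt_min !ltr_norml => /andP[/andP[h1 h2] /andP[h3 h4]].
  case/andP: hk => h5 h6; apply/andP; split; lra.
have [e e0 he] := (nbhs_ballP _ _).1 hnb.
exists e => // phi w hphi.
have inI : forall k, - (pi / 2) < (Rp^T *m phi) k 0 < pi / 2.
  apply: he; rewrite -ball_normE /ball_ /= distrC; exact: hphi.
have sge0 : 0 <= \sum_k Fterm phi k by apply: sumr_ge0 => k _; exact: Fterm_ge0.
have q0 : 0 <= qform Md (w - wbar) (w - wbar) by exact: qdiag_ge0.
rewrite storage_bar storage_eq; split; first by lra.
have [ew|wne] := eqVneq w wbar; last first.
  move=> _; have : 0 < qform Md (w - wbar) (w - wbar) by apply: qdiag_gt0; rewrite // subr_eq0.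
  lra.
move=> hneq; subst w.
have pne : phi != phibar.
  by apply: contraNneq hneq => ->.
have [k hk] : exists k, (Rp^T *m phi) k 0 != xb k.
  apply/existsP; move: pne; apply: contraR; rewrite negb_exists => /forallP h.
  rewrite -subr_eq0; apply/eqP/(Rphi_inj hne hc).
  rewrite mulmxBr; apply/matrixP => k j; rewrite (ord1 j) [in RHS]mxE.
  by rewrite [X in X = _]mxE [X in _ + X = _]mxE (eqP (negPn (h k))) subrr.
have : 0 < \sum_k Fterm phi k.
  rewrite (bigD1 k) //=; apply: ltr_pwDl; first exact: Fterm_gt0.
  by apply: sumr_ge0 => i _; exact: Fterm_ge0.
lra.
Qed.

End Net3.

Lemma passivity_alg (R : realType) p q r (w wb pg u ub : 'cV[R]_p) (Dd : 'M[R]_p)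
  (Eg : 'M[R]_(p, q)) (El : 'M[R]_(r, q)) (gU gb : 'cV[R]_q) (xa' : 'cV[R]_r) :
  0 = - (Dd *m wb) - Eg *m gb + pg + ub ->
  El *m gU = El *m gb ->
  ip wb (Eg *m (gU - gb)) = 0 ->
  ip (w - wb) (- (Dd *m w) - Eg *m gU + pg + u)
  + ip (gU - gb) (Eg^T *m w + El^T *m xa')
  = - qform Dd (w - wb) (w - wb) + ip (w - wb) (u - ub).
Proof.
move=> heq hl hc.
have E1 := congr1 (ip w) heq.
have E2 := congr1 (ip wb) heq.
rewrite ip0r !ipDr !ipNr in E1.
rewrite ip0r !ipDr !ipNr in E2.
have E3 : ip (gU - gb) (El^T *m xa') = 0.
  by rewrite ip_trmx mulmxBr hl subrr ip0l.
have E4 : ip (gU - gb) (Eg^T *m w) = ip w (Eg *m gU) - ip w (Eg *m gb).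
  by rewrite ip_trmx ipC mulmxBr ipBr.
rewrite mulmxBr ipBr in hc.
rewrite [ip (gU - gb) _]ipDr E3 E4 qform_ip mulmxBr !ipBl !ipBr !ipDr !ipNr.
lra.
Qed.

Unset Implicit Arguments.
Set Strict Implicit.

Theorem proposition1 (R : realType) (n m ng : nat)
  (src snk : 'I_m -> 'I_(n.+1)) (beta : 'I_m -> R) (V : 'I_(n.+1) -> R)
  (Mv Dv : 'I_(ng.+1) -> R) (pg : 'cV[R]_(ng.+1)) (pl : 'cV[R]_(n - ng))
  (ubar : 'cV[R]_(ng.+1)) (phigbar : 'cV[R]_n) (thlbar : 'cV[R]_(n - ng))
  (wstar : R) :
  (ng <= n)%N ->
  simple_graph src snk -> connected_graph src snk ->
  (forall k, beta k < 0) -> (forall i, 0 < V i) ->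
  (forall i, 0 < Mv i) -> (forall i, 0 < Dv i) ->
  let phibar := phigbar + (El R n ng)^T *m thlbar in
  let wbar : 'cV[R]_(ng.+1) := const_mx wstar in
  (* equilibrium for the constant input ubar *)
  0 = - (diag_mx (\row_i Dv i) *m wbar) - Eg R n ng *m gradU src snk beta V phibar + pg + ubar ->
  0 = - (El R n ng *m gradU src snk beta V phibar) + pl ->
  (forall k, - (pi / 2) < ((Rphi R src snk)^T *m phibar) k 0 < pi / 2) ->
  let f := pn_f src snk beta V Mv Dv pg in
  let g := pn_g src snk beta V pl in
  let h := @pn_h R n ng in
  let S := storage src snk beta V Mv phibar wbar in
  [/\ output_strictly_incr_passive f g h ubar (phigbar, wbar) thlbar,
      (forall a b xo xa u, dae_solution f g a b xo xa u ->
        forall t, a < t < b ->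
          let St := fun s => S ((xo s).1 + (El R n ng)^T *m xa s) (xo s).2 in
          derivable St t 1 /\
          derive1 St t =
            - qform (diag_mx (\row_i Dv i)) ((xo t).2 - wbar) ((xo t).2 - wbar)
            + ip ((xo t).2 - wbar) (u t - ubar)) &
      (* strict local minimum of S at (phibar, wbar) *)
      exists2 e : R, 0 < e &
        forall phi w, `|phi - phibar| < e -> `|w - wbar| < e ->
          (phi, w) != (phibar, wbar) -> S phibar wbar < S phi w].
Proof.
move=> hng hsg hcg hbeta hV hM hD phibar wbar heq hpl hbar f g h S.
have hne : forall k, src k != snk k := hsg.1.
have hg : forall k, 0 < gam src snk beta V k.
  move=> k; rewrite /gam; apply: mulr_gt0; last exact: hV.
  apply: mulr_gt0; last exact: hV.
  by rewrite normr_gt0 ltr0_neq0.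
have [e e0 he] := @strict_min R n m ng src snk beta V Mv phibar wbar hne hcg hg hM hbar.
have P2 : forall a b xo xa u, dae_solution f g a b xo xa u ->
        forall t, a < t < b ->
          let St := fun s => S ((xo s).1 + (El R n ng)^T *m xa s) (xo s).2 in
          derivable St t 1 /\
          derive1 St t =
            - qform (diag_mx (\row_i Dv i)) ((xo t).2 - wbar) ((xo t).2 - wbar)
            + ip ((xo t).2 - wbar) (u t - ubar).
  move=> a b xo xa u hsol t ht St.
  have [dxo dxa hf hgz] := hsol t ht.
  have [hd hde] := @SS_path R n m ng src snk beta V Mv phibar wbar xo xa t dxo dxa.
  split; first exact: hd.
  rewrite /St -/(SS src snk beta V Mv phibar wbar) hde dSE /=.
  rewrite hf /= qform_inv //.
  apply: passivity_alg heq _ _.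
  - move: hgz; rewrite /g /pn_g /phiL => /eqP; rewrite addrC subr_eq0 => /eqP <-.
    by move/eqP: hpl; rewrite eq_sym addrC subr_eq0 => /eqP.
  - apply: ip_const_Eg => //.
    move: hgz; rewrite /g /pn_g /phiL => /eqP; rewrite addrC subr_eq0 => /eqP hgz.
    move/eqP: hpl; rewrite eq_sym addrC subr_eq0 => /eqP hpl'.
    by rewrite mulmxBr -hgz -hpl' subrr.
split => //.
- exists (diag_mx (\row_i Dv i)); split.
    split; first exact: tr_diag_mx.
    by move=> v vnz; apply: qdiag_gt0.
  have [g1 g2 g3] := @good_SS R n m ng src snk beta V Mv phibar wbar.
  exists (SS src snk beta V Mv phibar wbar).
  exists [set x | `|phiL x - phibar| < e].
  split.
  + split => // v.
    have -> : (fun x => 'D_v (SS src snk beta V Mv phibar wbar) x) =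
              (fun x => dS src snk beta V Mv phibar wbar x v).
      by apply/funext => x; rewrite deriveE // g2.
    exact: g3.
  + apply: (@filterS _ _ _ [set x | forall i : 'I_n, `|phiL x i 0 - phibar i 0| < e]).
      move=> x /= hx; apply: mxnorm_lt => // i j; rewrite (ord1 j) mxE [X in `|_ + X|]mxE.
      exact: hx.
    apply: (@filter_forall _ _ (fun i x => `|phiL x i 0 - phibar i 0| < e) _ (nbhs_filter _)) => i.
    have [d1 _ _] := @good_phiLc R n ng i.
    have := differentiable_continuous (d1 (phigbar, wbar, thlbar)).
    move/cvgrPdist_lt => /(_ e e0); apply: filterS => x.
    by rewrite !phiLcE distrC.
  + move=> x /= hx; exact: (he _ x.1.2 hx).1.
  + move=> a b xo xa u hsol t ht _.
    have [hd hde] := P2 a b xo xa u hsol t ht.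
    split; first exact: hd.
    by rewrite hde /h /pn_h.
- exists e => // phi w hphi _ hneq.
  exact: (he phi w hphi).2 hneq.
Qed.
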